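(* Let $\mathbb{O}$ be the real algebra of octonions with its standard basis $1,e_1,\dots,e_7$, where $e_\ell^2=-1$ for all $\ell$, $e_\ell e_m=-e_m e_\ell$ for $\ell\neq m$, and for $\ell\ne m$ the product $e_\ell e_m$ equals $\pm e_p$ for some $p$. Call an element homogeneous if it is a nonzero real multiple of a basis element. Then there is no $n\ge 1$ and no map $\sigma$ from the homogeneous elements of $\mathbb{O}$ to $\Gamma=\mathbb{Z}_2^n$ such that for all homogeneous $x,y$ one has $\sigma(xy)=\sigma(x)+\sigma(y)$ and $xy=(-1)^{\langle\sigma(x),\sigma(y)\rangle}yx$, where $\langle\cdot,\cdot\rangle$ denotes the standard scalar product on $\mathbb{Z}_2^n$. That is, $\mathbb{O}$ cannot be realized as a graded commutative algebra.
   Context: For an abelian group $\Gamma=\mathbb{Z}_2^n$, a $\Gamma$-graded commutative algebra is an algebra $A$ with a basis of homogeneous elements each assigned a degree $\sigma\in\Gamma$ such that $\sigma(xy)=\sigma(x)+\sigma(y)$ and $xy=(-1)^{\langle\sigma(x),\sigma(y)\rangle}yx$ for homogeneous $x,y$, where $\langle\cdot,\cdot\rangle$ is the standard scalar product of vectors in $\mathbb{Z}_2^n$. *)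

(* Defs.v *)
From HB Require Import structures.
From mathcomp Require Import all_boot all_order all_algebra.
From mathcomp Require Import reals.
Set Implicit Arguments. Unset Strict Implicit. Unset Printing Implicit Defensive.
Import Order.TTheory GRing.Theory Num.Theory.
Local Open Scope ring_scope.

(* Octonions as R^8 with basis 1 = index 0, e_1..e_7 = indices 1..7.
   Multiplication table (Fano plane with lines {a, a+1, a+3} mod 7, on the
   shifted indices 0..6): e_a e_{a+1} = e_{a+3} and cyclic. *)

Definition fano_off (d : nat) : nat :=
  match d with 1 => 3 | 2 => 6 | 3 => 1 | 4 => 5 | 5 => 4 | _ => 2 end%N.

(* negative sign iff d is a non-residue mod 7 *)
Definition fano_neg (d : nat) : bool := (d == 3) || (d == 5) || (d == 6).

(* product of basis elements p, q (indices 0..7): (negative sign?, index) *)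
Definition bmul (p q : nat) : bool * nat :=
  if p == 0%N then (false, q)
  else if q == 0%N then (false, p)
  else if p == q then (true, 0%N)
  else let i := p.-1 in let j := q.-1 in
       let d := ((j + 7 - i) %% 7)%N in
       (fano_neg d, ((i + fano_off d) %% 7).+1).

Definition octo (R : realType) := 'rV[R]_8.

Definition obasis (R : realType) (i : 'I_8) : octo R := delta_mx 0 i.

Definition omul (R : realType) (x y : octo R) : octo R :=
  \row_(k < 8) \sum_(i < 8) \sum_(j < 8)
     (if (bmul i j).2 == (k : nat)
      then (if (bmul i j).1 then -1 else 1) * x 0 i * y 0 j else 0).

Definition homogeneous (R : realType) (x : octo R) : Prop :=
  exists (c : R) (i : 'I_8), c != 0 /\ x = c *: obasis R i.

Definition sdot (n : nat) (u v : 'rV['Z_2]_n) : 'Z_2 := \sum_(k < n) u 0 k * v 0 k.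

(* Main.v *)
Require Import Defs.
From HB Require Import structures.
From mathcomp Require Import all_boot all_order all_algebra.
From mathcomp Require Import reals.
Import Order.TTheory GRing.Theory Num.Theory.
Local Open Scope ring_scope.
Lemma omul_basis (R : realType) (p q : 'I_8) : omul (obasis R p) (obasis R q) =
  \row_(k < 8) (if (bmul p q).2 == (k : nat) then (if (bmul p q).1 then -1 else 1) else 0).
Proof.
apply/rowP => k; rewrite !mxE (bigD1 p) //=.
rewrite [X in _ + X]big1 ?addr0; last first.
  move=> i ip; apply: big1 => j _; rewrite /obasis !mxE eq_sym (negbTE ip) /=.
  by case: ifP => _; rewrite ?mulr0 ?mul0r.
rewrite (bigD1 q) //= [X in _ + X]big1 ?addr0; last first.
  move=> j jq; rewrite /obasis !mxE eq_sym (negbTE jq) /=.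
  by case: ifP => _; rewrite ?mulr0 ?mul0r.
by rewrite /obasis !mxE !eqxx /= !mulr1.
Qed.

Lemma hom_b (R : realType) i : homogeneous (obasis R i).
Proof. by exists 1, i; rewrite oner_neq0 scale1r. Qed.

Lemma e12 (R : realType) : omul (obasis R (@Ordinal 8 1 isT)) (obasis R (@Ordinal 8 2 isT)) = obasis R (@Ordinal 8 4 isT).
Proof.
rewrite omul_basis; apply/rowP => k; rewrite /obasis !mxE /=.
by case: k => -[|[|[|[|[|[|[|[|]]]]]]]].
Qed.

Lemma anti (R : realType) (a : 'I_8) : a \in [:: @Ordinal 8 1 isT; @Ordinal 8 2 isT; @Ordinal 8 4 isT] ->
  omul (obasis R a) (obasis R (@Ordinal 8 3 isT)) = - omul (obasis R (@Ordinal 8 3 isT)) (obasis R a)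
  /\ omul (obasis R a) (obasis R (@Ordinal 8 3 isT)) != 0.
Proof.
rewrite !inE => /or3P [] /eqP -> ; rewrite !omul_basis; split.
- by apply/rowP => k; rewrite !mxE /=; case: k => -[|[|[|[|[|[|[|[|]]]]]]]]; rewrite /= ?opprK ?oppr0.
- by apply/negP => /eqP/rowP/(_ (@Ordinal 8 7 isT)); rewrite !mxE /= => /eqP; rewrite ?oppr_eq0 ?oner_eq0.
- by apply/rowP => k; rewrite !mxE /=; case: k => -[|[|[|[|[|[|[|[|]]]]]]]]; rewrite /= ?opprK ?oppr0.
- by apply/negP => /eqP/rowP/(_ (@Ordinal 8 5 isT)); rewrite !mxE /= => /eqP; rewrite ?oppr_eq0 ?oner_eq0.
- by apply/rowP => k; rewrite !mxE /=; case: k => -[|[|[|[|[|[|[|[|]]]]]]]]; rewrite /= ?opprK ?oppr0.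
- by apply/negP => /eqP/rowP/(_ (@Ordinal 8 6 isT)); rewrite !mxE /= => /eqP; rewrite ?oppr_eq0 ?oner_eq0.
Qed.

Lemma sign1 (R : realType) (u v : octo R) (z : 'Z_2) :
  u = - v -> u != 0 -> u = (-1) ^+ (nat_of_ord z) *: v -> z = 1.
Proof.
move=> uv u0; case: z => -[|[|m]] Hz //=; last by move=> _; apply/val_inj.
rewrite expr0 scale1r => uv'.
have : (2%:R : R) *: v == 0 by rewrite scaler_nat mulr2n -{1}uv' uv addNr.
rewrite scaler_eq0 pnatr_eq0 /= => /eqP v0; by move: u0; rewrite uv' v0 eqxx.
Qed.

Lemma sdotDl n (u v w : 'rV['Z_2]_n) : sdot (u + v) w = sdot u w + sdot v w.
Proof. by rewrite /sdot -big_split; apply: eq_bigr => i _; rewrite mxE mulrDl. Qed.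

Theorem mainTheorem2 (R : realType) (n : nat) : (1 <= n)%N ->
  ~ exists sigma : octo R -> 'rV['Z_2]_n,
      forall x y : octo R, homogeneous x -> homogeneous y ->
        sigma (omul x y) = sigma x + sigma y /\
        omul x y = (-1) ^+ (nat_of_ord (sdot (sigma x) (sigma y))) *: omul y x.
Proof.
move=> _ [sigma H].
have hA (a : 'I_8) : a \in [:: @Ordinal 8 1 isT; @Ordinal 8 2 isT; @Ordinal 8 4 isT] ->
   sdot (sigma (obasis R a)) (sigma (obasis R (@Ordinal 8 3 isT))) = 1.
  move=> Ha; have [E1 E2] := anti R _ Ha.
  exact: sign1 E1 E2 (H _ _ (hom_b _ _) (hom_b _ _)).2.
have := (H _ _ (hom_b R (@Ordinal 8 1 isT)) (hom_b R (@Ordinal 8 2 isT))).1.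
rewrite e12 => E.
have := hA (@Ordinal 8 4 isT) isT.
by rewrite E sdotDl !hA.
Qed.
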